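(* Let $\varepsilon, D>0$. Let $(X_1,d_1)$ and $(X_2,d_2)$ be compact length spaces with closed measurement sets $S_1\subset X_1$ and $S_2\subset X_2$. Suppose that $\operatorname{diam}(X_1),\operatorname{diam}(X_2)<D$ and that both $(X_1,d_1)$ with $S_1$ and $(X_2,d_2)$ with $S_2$ are $\mathrm{BLIE}_\varepsilon$. If there is a homeomorphism $\phi\colon S_1\to S_2$, then \[ d_{GH}\big((X_1,d_1),(X_2,d_2)\big)\le \Big(\frac{2D}{\varepsilon}+1\Big)\, d^{H}_{C(S_1)}\big(\mathcal R_{X_1,S_1}(X_1),\mathcal R_{X_2,S_2,\phi}(X_2)\big). \] In particular, if the travel time data of $X_1$ and $X_2$ coincide, then $(X_1,d_1)$ and $(X_2,d_2)$ are isometric.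
   Context: A length space is a metric space $(X,d)$ in which $d(x,y)$ equals the infimum of the lengths $L(\gamma)=\sup\sum_i d(\gamma(t_{i-1}),\gamma(t_i))$ (supremum over partitions) of curves $\gamma$ from $x$ to $y$. For a compact length space $(X,d)$ and closed $S\subset X$, the travel time map is $\mathcal R_{X,S}\colon (X,d)\to (C(S),\|\cdot\|_\infty)$, $\mathcal R_{X,S}(p)=r_p$ with $r_p(z)=d(p,z)$ for $z\in S$; its image $\mathcal R_{X,S}(X)$ is the travel time data. A continuous map $f\colon (X,d_X)\to(Y,d_Y)$ is an $\varepsilon$-local isometry if $d_Y(f(p),f(q))=d_X(p,q)$ whenever $d_X(p,q)<\varepsilon$. $(X,d)$ with measurement set $S$ is $\mathrm{BLIE}_\varepsilon$ if $\mathcal R_{X,S}$ is a topological embedding and $\mathcal R_{X,S}^{-1}\colon(\mathcal R_{X,S}(X),\|\cdot\|_\infty)\to (X,d)$ is an $\varepsilon$-local isometry. For a homeomorphism $\phi\colon S_1\to S_2$, $\mathcal R_{X_2,S_2,\phi}(X_2):=\{d_2(q,\phi(\cdot))\colon S_1\to\mathbb R \mid q\in X_2\}\subset C(S_1)$. $d^H_{C(S_1)}$ is the Hausdorff distance in $(C(S_1),\|\cdot\|_\infty)$ and $d_{GH}$ the Gromov–Hausdorff distance. The travel time data of $X_1,X_2$ coincide if $d^H_{C(S_1)}(\mathcal R_{X_1,S_1}(X_1),\mathcal R_{X_2,S_2,\phi}(X_2))=0$ for some homeomorphism $\phi\colon S_1\to S_2$. *)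

(* Defs.v *)
From mathcomp Require Import all_boot all_order all_algebra.
From mathcomp Require Import boolp classical_sets reals constructive_ereal ereal.
Set Implicit Arguments. Unset Strict Implicit. Unset Printing Implicit Defensive.
Import Order.TTheory GRing.Theory Num.Theory.
Local Open Scope classical_set_scope.
Local Open Scope ring_scope.

Section MetricDefs.
Variable R : realType.

Definition is_metric (X : Type) (d : X -> X -> R) : Prop :=
  (forall x y, 0 <= d x y) /\ (forall x y, d x y = 0 <-> x = y) /\
  (forall x y, d x y = d y x) /\ (forall x y z, d x z <= d x y + d y z).

Definition mopen (X : Type) (d : X -> X -> R) (U : set X) : Prop :=
  forall x, U x -> exists r, 0 < r /\ forall y, d x y < r -> U y.

Definition mclosed (X : Type) (d : X -> X -> R) (S : set X) : Prop :=
  mopen d (~` S).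

Definition mcompact (X : Type) (d : X -> X -> R) : Prop :=
  forall (I : Type) (U : I -> set X), (forall i, mopen d (U i)) ->
    (forall x, exists i, U i x) ->
    exists (n : nat) (f : nat -> I), forall x, exists k, (k < n)%N /\ U (f k) x.

Definition diam (X : Type) (d : X -> X -> R) : \bar R :=
  ereal_sup [set (d x y)%:E | x in setT & y in setT].

Definition curve_continuous (X : Type) (d : X -> X -> R) (g : R -> X) : Prop :=
  forall t, 0 <= t <= 1 -> forall e, 0 < e -> exists delta, 0 < delta /\
    forall s, 0 <= s <= 1 -> `|s - t| < delta -> d (g t) (g s) < e.

Fixpoint partition_sum (X : Type) (d : X -> X -> R) (g : R -> X) (t0 : R)
    (ts : seq R) : R :=
  match ts with
  | [::] => 0
  | t :: ts' => d (g t0) (g t) + partition_sum d g t ts'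
  end.

(* 0 = t_0 <= t_1 <= ... <= t_n = 1 is encoded as ts = [:: t_1; ...; t_n] *)
Definition is_partition (ts : seq R) : Prop :=
  path (fun a b : R => a <= b) 0 ts /\ last 0 ts = 1.

Definition curve_length (X : Type) (d : X -> X -> R) (g : R -> X) : \bar R :=
  ereal_sup [set (partition_sum d g 0 ts)%:E | ts in is_partition].

Definition length_space (X : Type) (d : X -> X -> R) : Prop :=
  is_metric d /\
  forall x y, (d x y)%:E =
    ereal_inf [set curve_length d g | g in
                 [set g | curve_continuous d g /\ g 0 = x /\ g 1 = y]].

(* sup-norm distance in C(S) between f, g (functions restricted to S);
   0 is included so that C(empty) gets distance 0 *)
Definition supdist (A : Type) (S : set A) (f g : A -> R) : \bar R :=
  ereal_sup ([set (`|f z - g z|)%:E | z in S] `|` [set 0%E]).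

Definition hausdorff (T : Type) (dT : T -> T -> \bar R) (A B : set T) : \bar R :=
  maxe (ereal_sup [set ereal_inf [set dT a b | b in B] | a in A])
       (ereal_sup [set ereal_inf [set dT a b | a in A] | b in B]).

(* travel time map R_{X,S}(p) = r_p = d(p, .) restricted to S, and its image *)
Definition travel_time (X : Type) (d : X -> X -> R) (p : X) : X -> R :=
  fun z => d p z.

Definition travel_time_data (X : Type) (d : X -> X -> R) : set (X -> R) :=
  [set travel_time d p | p in setT].

Definition travel_time_data_phi (X1 X2 : Type) (d2 : X2 -> X2 -> R)
    (phi : X1 -> X2) : set (X1 -> R) :=
  [set (fun z => d2 q (phi z)) | q in setT].

Definition tt_embedding (X : Type) (d : X -> X -> R) (S : set X) : Prop :=
  (forall p q, supdist S (travel_time d p) (travel_time d q) = 0%E -> p = q) /\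
  (forall p e, 0 < e -> exists delta, 0 < delta /\ forall q,
      d p q < delta -> (supdist S (travel_time d p) (travel_time d q) < e%:E)%E) /\
  (forall p e, 0 < e -> exists delta, 0 < delta /\ forall q,
      (supdist S (travel_time d p) (travel_time d q) < delta%:E)%E -> d p q < e).

Definition BLIE (X : Type) (d : X -> X -> R) (S : set X) (eps : R) : Prop :=
  tt_embedding d S /\
  forall p q, (supdist S (travel_time d p) (travel_time d q) < eps%:E)%E ->
    (d p q)%:E = supdist S (travel_time d p) (travel_time d q).

Definition cont_on (X Y : Type) (dX : X -> X -> R) (dY : Y -> Y -> R)
    (A : set X) (f : X -> Y) : Prop :=
  forall x, A x -> forall e, 0 < e -> exists delta, 0 < delta /\
    forall y, A y -> dX x y < delta -> dY (f x) (f y) < e.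

Definition homeo_on (X1 X2 : Type) (d1 : X1 -> X1 -> R) (d2 : X2 -> X2 -> R)
    (S1 : set X1) (S2 : set X2) (phi : X1 -> X2) : Prop :=
  exists psi : X2 -> X1,
    (forall x, S1 x -> S2 (phi x)) /\ (forall y, S2 y -> S1 (psi y)) /\
    (forall x, S1 x -> psi (phi x) = x) /\ (forall y, S2 y -> phi (psi y) = y) /\
    cont_on d1 d2 S1 phi /\ cont_on d2 d1 S2 psi.

Definition isom_embedding (X Z : Type) (dX : X -> X -> R) (dZ : Z -> Z -> R)
    (f : X -> Z) : Prop :=
  forall x y, dZ (f x) (f y) = dX x y.

Definition GH_dist (X1 X2 : Type) (d1 : X1 -> X1 -> R) (d2 : X2 -> X2 -> R)
    : \bar R :=
  ereal_inf [set r | exists (Z : Type) (dZ : Z -> Z -> R) (f1 : X1 -> Z)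
      (f2 : X2 -> Z), is_metric dZ /\ isom_embedding d1 dZ f1 /\
      isom_embedding d2 dZ f2 /\
      r = hausdorff (fun a b => (dZ a b)%:E) (range f1) (range f2)].

Definition isometric (X1 X2 : Type) (d1 : X1 -> X1 -> R) (d2 : X2 -> X2 -> R)
    : Prop :=
  exists f : X1 -> X2, bijective f /\ forall x y, d2 (f x) (f y) = d1 x y.

End MetricDefs.

(* Main.v *)
Require Import Defs.
From mathcomp Require Import all_boot all_order all_algebra.
From mathcomp Require Import boolp classical_sets reals constructive_ereal ereal.
From mathcomp Require Import topology normedtype.
From mathcomp Require Import ring lra.
Import Order.TTheory GRing.Theory Num.Theory.
Import numFieldNormedType.Exports.
Local Open Scope classical_set_scope.
Local Open Scope ring_scope.
Set Implicit Arguments. Unset Strict Implicit. Unset Printing Implicit Defensive.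
Lemma sd_ge0 (R : realType) (A : Type) (S : set A) (f g : A -> R) :
  (0 <= supdist S f g)%E.
Proof. by apply: ereal_sup_ubound; right. Qed.

Lemma sd_ub (R : realType) (A : Type) (S : set A) (f g : A -> R) z :
  S z -> ((`|f z - g z|)%:E <= supdist S f g)%E.
Proof. by move=> Sz; apply: ereal_sup_ubound; left; exists z. Qed.

Lemma sd_le (R : realType) (A : Type) (S : set A) (f g : A -> R) (c : \bar R) :
  (0 <= c)%E -> (forall z, S z -> ((`|f z - g z|)%:E <= c)%E) -> (supdist S f g <= c)%E.
Proof.
move=> c0 H; apply: ge_ereal_sup => y [[z Sz <-]|->] //; exact: H.
Qed.

Lemma sd_sym (R : realType) (A : Type) (S : set A) (f g : A -> R) :
  supdist S f g = supdist S g f.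
Proof.
rewrite /supdist; congr ereal_sup; apply/seteqP; split => y [[z Sz <-]|->];
  (try by right); by left; exists z => //; rewrite distrC.
Qed.

Lemma sd_tri (R : realType) (A : Type) (S : set A) (f g h : A -> R) :
  (supdist S f h <= supdist S f g + supdist S g h)%E.
Proof.
apply: sd_le; first by apply: adde_ge0; exact: sd_ge0.
move=> z Sz; apply: le_trans (leeD (sd_ub f g Sz) (sd_ub g h Sz)).
have -> : f z - h z = (f z - g z) + (g z - h z) by ring.
by rewrite -EFinD lee_fin ler_normD.
Qed.

Lemma sd_tt_le (R : realType) (X : Type) (d : X -> X -> R) (S : set X) p q :
  is_metric d -> (supdist S (travel_time d p) (travel_time d q) <= (d p q)%:E)%E.
Proof.
move=> [d0 [d00 [dsym dtri]]]; apply: sd_le; first by rewrite lee_fin.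
move=> z _; rewrite lee_fin /travel_time ler_norml.
have := dtri p q z; have := dtri q p z; rewrite (dsym q p) => ? ?.
apply/andP; split; lra.
Qed.
Lemma local_step (R : realType) (A X Y : Type) (S : set A) (E1 : X -> A -> R)
  (d1 : X -> X -> R) (E2 : Y -> A -> R) (d2 : Y -> Y -> R) (eps h : R) x x' y y' :
 (forall a b, (supdist S (E1 a) (E1 b) <= (d1 a b)%:E)%E) ->
 (forall a b, (supdist S (E2 a) (E2 b) < eps%:E)%E ->
    (d2 a b)%:E = supdist S (E2 a) (E2 b)) ->
 (supdist S (E1 x) (E2 y) <= h%:E)%E -> (supdist S (E1 x') (E2 y') <= h%:E)%E ->
 d1 x x' < eps - 2 * h -> d2 y y' <= d1 x x' + 2 * h.
Proof.
move=> P1 Q2 Hx Hx' dlt.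
have h0 : 0 <= h by rewrite -lee_fin; apply: le_trans Hx; exact: sd_ge0.
have s2 : (supdist S (E2 y) (E2 y') <= (h + d1 x x' + h)%:E)%E.
  apply: le_trans (sd_tri _ (E2 y) (E1 x) (E2 y')) _.
  rewrite !EFinD -addeA; apply: leeD; first by rewrite sd_sym.
  apply: le_trans (sd_tri _ (E1 x) (E1 x') (E2 y')) _.
  by apply: leeD.
have lt2 : (supdist S (E2 y) (E2 y') < eps%:E)%E.
  by apply: le_lt_trans s2 _; rewrite lte_fin; lra.
by rewrite -lee_fin (Q2 _ _ lt2); apply: le_trans s2 _; rewrite lee_fin; lra.
Qed.
Lemma cont01 (R : realType) (f : R -> R) :
  (forall t, 0 <= t <= 1 -> forall e, 0 < e -> exists delta, 0 < delta /\
    forall s, 0 <= s <= 1 -> `|s - t| < delta -> `|f t - f s| < e) ->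
  {within `[0, 1], continuous f}.
Proof.
move=> H; apply/subspace_continuousP => x Ax.
apply/cvgrPdist_lt => e e0.
have Ax' : 0 <= x <= 1 by move: Ax; rewrite /= in_itv.
have [dl [dl0 Hd]] := H x Ax' e e0.
rewrite /within /=. apply/nbhs_ballP. exists dl => // t /= Bt At.
apply: Hd; first by move: At; rewrite /= in_itv.
by move: Bt; rewrite /ball /= distrC.
Qed.

Lemma metric_dist (R : realType) (X : Type) (d : X -> X -> R) x y z :
  is_metric d -> `|d x y - d x z| <= d y z.
Proof.
move=> [d0 [d00 [dsym dtri]]]; rewrite ler_norml.
have := dtri x y z; have := dtri x z y; rewrite (dsym z y) => ? ?.
apply/andP; split; lra.
Qed.

Lemma chain (R : realType) (X Y : Type) (dX : X -> X -> R) (dY : Y -> Y -> R)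
  (C : X -> Y -> Prop) (rho k : R) :
  length_space dX -> (forall a b c, dY a c <= dY a b + dY b c) ->
  (forall x, exists y, C x y) -> 0 < rho -> 0 <= k ->
  (forall x x' y y', C x y -> C x' y' -> dX x x' < rho -> dY y y' <= dX x x' + k) ->
  forall n x x' y y', C x y -> C x' y' -> dX x x' < n%:R * rho ->
  forall eta, 0 < eta -> dY y y' <= dX x x' + n%:R * k + eta.
Proof.
move=> [met len] tri tot rho0 k0 loc.
have dX0 : forall a b, 0 <= dX a b by case: met.
have dXaa : forall a, dX a a = 0 by move=> a; case: met => _ [H _]; exact/H.
elim=> [|n IH] x x' y y' Cxy Cxy' dlt eta eta0.
  by move: dlt; rewrite mul0r => /(le_lt_trans (dX0 x x')); rewrite ltxx.
have nk0 : 0 <= n%:R * k by apply: mulr_ge0.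
have [dr|dr] := ltP (dX x x') rho.
  apply: le_trans (loc _ _ _ _ Cxy Cxy' dr) _.
  rewrite -natr1 mulrDl mul1r; lra.
set d := dX x x' in dlt dr *.
move: dlt; rewrite -natr1 mulrDl mul1r => dlt.
set e1 := Num.min eta ((n%:R * rho + rho) - d) / 2.
have e1a : Num.min eta ((n%:R * rho + rho) - d) <= eta by rewrite ge_min lexx.
have e1b : Num.min eta ((n%:R * rho + rho) - d) <= (n%:R * rho + rho) - d
  by rewrite ge_min lexx orbT.
have e1c : 0 < Num.min eta ((n%:R * rho + rho) - d)
  by rewrite lt_min eta0 /=; lra.
have e10 : 0 < e1 by rewrite /e1; lra.
have : (ereal_inf [set curve_length dX g | g in
                 [set g | curve_continuous dX g /\ g 0%R = x /\ g 1%R = x']]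
          < (d + e1)%:E)%E by rewrite -len lte_fin ltrDl.
move=> /ereal_inf_lt [_ [g [gc [g0 g1]] <-]] Lg.
set M := Num.max (0:R) (d + e1 - n%:R * rho).
have M1 : 0 <= M by rewrite le_max lexx.
have M2 : d + e1 - n%:R * rho <= M by rewrite le_max lexx orbT.
have M3 : M < rho by rewrite gt_max rho0 /=; rewrite /e1; lra.
set a := (M + rho) / 2.
have [t t01 ft] : exists2 t, t \in `[0, 1] & dX x (g t) = a.
  apply: IVT; first by [].
    apply: cont01 => t t01 e e0.
    have [dl [dl0 Hd]] := gc t t01 e e0.
    exists dl; split => // s s01 st.
    by apply: le_lt_trans (Hd s s01 st); exact: metric_dist.
  rewrite g0 g1 dXaa -/d.
  have d0 : 0 <= d by apply: dX0.
  apply/andP; split.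
    by rewrite ge_min; apply/orP; left; rewrite /a; lra.
  by rewrite le_max; apply/orP; right; rewrite /a; lra.
have t01' : 0 <= t <= 1 by move: t01; rewrite in_itv.
have part : ((partition_sum dX g 0 [:: t; 1])%:E <= curve_length dX g)%E.
  apply: ereal_sup_ubound; exists [:: t; 1] => //; split => //=.
  by case/andP: t01' => -> ->.
have ps : a + dX (g t) x' < d + e1.
  rewrite -lte_fin; apply: le_lt_trans Lg.
  by move: part; rewrite /= g0 g1 ft addr0.
have [ym Cm] := tot (g t).
have l1 := loc _ _ _ _ Cxy Cm.
rewrite ft in l1.
have l1' : dY y ym <= a + k by apply: l1; rewrite /a; lra.
have IH' := IH (g t) x' ym y' Cm Cxy'.
have l2 : dY ym y' <= dX (g t) x' + n%:R * k + e1.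
  have aM : M < a by rewrite /a; lra.
  by apply: IH' => //; lra.
apply: le_trans (tri _ ym _) _.
rewrite mulrDl mul1r.
have : e1 * 2 <= eta by rewrite /e1; lra.
lra.
Qed.
Definition Wset (R : realType) (X1 X2 : Type) (d1 : X1 -> X1 -> R) (d2 : X2 -> X2 -> R)
  (C : X1 -> X2 -> Prop) (x : X1) (y : X2) : set R :=
  [set r | exists p q, C p q /\ r = d1 x p + d2 q y].

Definition glued (R : realType) (X1 X2 : Type) (d1 : X1 -> X1 -> R) (d2 : X2 -> X2 -> R)
  (C : X1 -> X2 -> Prop) (B : R) (a b : X1 + X2) : R :=
  match a, b with
  | inl x, inl x' => d1 x x'
  | inr y, inr y' => d2 y y'
  | inl x, inr y => inf (Wset d1 d2 C x y) + B / 2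
  | inr y, inl x => inf (Wset d1 d2 C x y) + B / 2
  end.

Lemma glue (R : realType) (X1 X2 : Type) (d1 : X1 -> X1 -> R) (d2 : X2 -> X2 -> R)
  (C : X1 -> X2 -> Prop) (B : R) :
  is_metric d1 -> is_metric d2 -> (forall x, exists y, C x y) ->
  (forall y, exists x, C x y) -> 0 < B ->
  (forall p q p' q', C p q -> C p' q' -> d1 p p' <= d2 q q' + B) ->
  (forall p q p' q', C p q -> C p' q' -> d2 q q' <= d1 p p' + B) ->
  (GH_dist d1 d2 <= (B / 2)%:E)%E.
Proof.
move=> m1 m2 t1 t2 B0 dis1 dis2.
have m1' := m1; have m2' := m2.
move: m1' m2' => [p1 [z1 [s1 tr1]]] [p2 [z2 [s2 tr2]]].
have Wlb : forall x y, has_lbound (Wset d1 d2 C x y).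
  move=> x y; exists 0 => r [p [q [_ ->]]]; exact: addr_ge0.
have Wne : forall x y, Wset d1 d2 C x y !=set0.
  move=> x y; have [q Cq] := t1 x; by exists (d1 x x + d2 q y), x, q.
have Wle : forall x y p q, C p q -> inf (Wset d1 d2 C x y) <= d1 x p + d2 q y.
  by move=> x y p q Cpq; apply: ge_inf => //; exists p, q.
have Wge : forall x y c, (forall p q, C p q -> c <= d1 x p + d2 q y) ->
    c <= inf (Wset d1 d2 C x y).
  by move=> x y c H; apply: lb_le_inf => // r [p [q [Cpq ->]]]; exact: H.
have W0 : forall x y, 0 <= inf (Wset d1 d2 C x y).
  by move=> x y; apply: (Wge) => p q _; exact: addr_ge0.
have zz1 : forall x, d1 x x = 0 by move=> x; exact/z1.
have zz2 : forall x, d2 x x = 0 by move=> x; exact/z2.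
set dZ := glued d1 d2 C B.
have ta : forall x x' y, d1 x x' <= dZ (inl x) (inr y) + dZ (inr y) (inl x').
  move=> x x' y /=.
  suff : d1 x x' - B - inf (Wset d1 d2 C x' y) <= inf (Wset d1 d2 C x y) by lra.
  apply: (Wge) => p q Cpq.
  suff : d1 x x' - B - d1 x p - d2 q y <= inf (Wset d1 d2 C x' y) by lra.
  apply: (Wge) => p' q' Cpq'.
  have := dis1 _ _ _ _ Cpq Cpq'; have := tr1 x p x'; have := tr1 p p' x';
  have := tr2 q y q'; rewrite (s1 p' x') (s2 y q'); lra.
have tb : forall x y y', d2 y y' <= dZ (inr y) (inl x) + dZ (inl x) (inr y').
  move=> x y y' /=.
  suff : d2 y y' - B - inf (Wset d1 d2 C x y') <= inf (Wset d1 d2 C x y) by lra.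
  apply: (Wge) => p q Cpq.
  suff : d2 y y' - B - d1 x p - d2 q y <= inf (Wset d1 d2 C x y') by lra.
  apply: (Wge) => p' q' Cpq'.
  have := dis2 _ _ _ _ Cpq Cpq'; have := tr2 y q y'; have := tr2 q q' y';
  have := tr1 p x p'; rewrite (s1 p x) (s2 y q); lra.
have tc : forall x x' y, inf (Wset d1 d2 C x y) <= d1 x x' + inf (Wset d1 d2 C x' y).
  move=> x x' y.
  suff : inf (Wset d1 d2 C x y) - d1 x x' <= inf (Wset d1 d2 C x' y) by lra.
  apply: (Wge) => p q Cpq.
  have := Wle x y p q Cpq; have := tr1 x x' p; lra.
have td : forall x y y', inf (Wset d1 d2 C x y) <= inf (Wset d1 d2 C x y') + d2 y' y.
  move=> x y y'.
  suff : inf (Wset d1 d2 C x y) - d2 y' y <= inf (Wset d1 d2 C x y') by lra.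
  apply: (Wge) => p q Cpq.
  have := Wle x y p q Cpq; have := tr2 q y' y; lra.
have mZ : is_metric dZ.
  split; [|split; [|split]].
  - case=> [x|y] [x'|y'] /=; rewrite ?p1 ?p2 //;
      (apply: addr_ge0; [exact: W0|lra]).
  - case=> [x|y] [x'|y'] /=.
    + by split => [/z1 -> //|H]; case: H => ->; exact/z1.
    + split => H; [exfalso; have := W0 x y'; lra | discriminate].
    + split => H; [exfalso; have := W0 x' y; lra | discriminate].
    + by split => [/z2 -> //|H]; case: H => ->; exact/z2.
  - by case=> [x|y] [x'|y'] /=.
  - case=> [x|y] [x'|y'] [x''|y''] /=.
    + exact: tr1.
    + have := tc x x' y''; lra.
    + exact: ta.
    + have := td x y'' y'; lra.
    + have := tc x'' x' y; rewrite (s1 x'' x'); lra.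
    + exact: tb.
    + have := td x'' y y'; rewrite (s2 y' y); lra.
    + exact: tr2.
apply: ge_ereal_inf.
exists (hausdorff (fun a b => (dZ a b)%:E) (range inl) (range inr)).
  by exists (X1 + X2)%type, dZ, inl, inr.
rewrite /hausdorff ge_max; apply/andP; split; apply: ge_ereal_sup.
- move=> _ [_ [x _ <-] <-]; have [q Cq] := t1 x.
  apply: ge_ereal_inf; exists ((dZ (inl x) (inr q))%:E); first by exists (inr q) => //; exists q.
  rewrite lee_fin /=; have := Wle x q x q Cq; rewrite zz1 zz2; lra.
- move=> _ [_ [y _ <-] <-]; have [p Cp] := t2 y.
  apply: ge_ereal_inf; exists ((dZ (inl p) (inr y))%:E); first by exists (inl p) => //; exists p.
  rewrite lee_fin /=; have := Wle p y p y Cp; rewrite zz1 zz2; lra.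
Qed.
Lemma pos_min_list (R : realType) (I : Type) (v : I -> R) (g : nat -> I) :
  (forall i, 0 < v i) ->
  forall n, exists m, 0 < m /\ forall k, (k < n)%N -> m <= v (g k).
Proof.
move=> vp; elim=> [|n [m [m0 Hm]]]; first by exists 1.
exists (Num.min m (v (g n))); split; first by rewrite lt_min m0 vp.
move=> k; rewrite ltnS leq_eqVlt => /orP [/eqP ->|kn].
  by rewrite ge_min lexx orbT.
by rewrite ge_min (Hm k kn).
Qed.

Lemma zero_attained (R : realType) (X : Type) (d : X -> X -> R) (F : X -> R) :
  mcompact d -> (forall x y, F x <= F y + d x y) ->
  (forall r, 0 < r -> exists x, F x < r) -> (forall x, 0 <= F x) ->
  exists x, F x = 0.
Proof.
move=> cpt Lip apx F0.
apply: contrapT => /forallNP nz.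
have Fp : forall x, 0 < F x by move=> x; rewrite lt_neqAle F0 andbT eq_sym; exact/eqP.
pose I := {r : R | 0 < r}.
pose U := fun i : I => [set x | sval i < F x].
have Uo : forall i, mopen d (U i).
  move=> [r r0] x /= Ux; exists (F x - r); split; first by rewrite subr_gt0.
  move=> y dxy; rewrite /U /=; move: Ux; rewrite /U /= => Ux; have := Lip x y; lra.
have Uc : forall x, exists i, U i x.
  move=> x; have h : 0 < F x / 2 by rewrite divr_gt0.
  by exists (exist (fun r : R => 0 < r) _ h); rewrite /U /=; have := Fp x; lra.
have [n [g Hg]] := cpt I U Uo Uc.
have [m [m0 Hm]] := @pos_min_list R I (fun i : I => sval i) g (fun i => svalP i) n.
have [x Fx] := apx m m0.
have [k [kn Ux]] := Hg x.
have := Hm k kn; move: Ux; rewrite /U /=; lra.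
Qed.
Lemma F4 (R : realType) (X1 X2 : Type) (d2 : X2 -> X2 -> R) (S1 : set X1) (S2 : set X2)
  (phi : X1 -> X2) (psi : X2 -> X1) :
  (forall x, S1 x -> S2 (phi x)) -> (forall y, S2 y -> S1 (psi y)) ->
  (forall y, S2 y -> phi (psi y) = y) ->
  forall q q', supdist S1 (fun z => d2 q (phi z)) (fun z => d2 q' (phi z)) =
    supdist S2 (travel_time d2 q) (travel_time d2 q').
Proof.
move=> phiS psiS phiK q q'; rewrite /supdist; congr ereal_sup; congr setU.
apply/seteqP; split => _ [z Sz <-].
- by exists (phi z); [exact: phiS|].
- by exists (psi z); [exact: psiS| rewrite /travel_time phiK].
Qed.

Lemma zero_attainedE (R : realType) (X : Type) (d : X -> X -> R) (G : X -> \bar R) (M : R) :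
  mcompact d -> (forall x, 0 <= G x)%E -> (forall x, G x <= M%:E)%E ->
  (forall x y, G x <= G y + (d x y)%:E)%E ->
  (forall r, 0 < r -> exists x, (G x < r%:E)%E) -> exists x, G x = 0%E.
Proof.
move=> cpt G0 GM Lip apx.
have Gf : forall x, G x = (fine (G x))%:E.
  move=> x; rewrite fineK // ge0_fin_numE //; apply: le_lt_trans (GM x) _; exact: ltry.
have [x Fx] : exists x, fine (G x) = 0.
  apply: (@zero_attained R X d (fun x => fine (G x)) cpt).
  - move=> x y; rewrite -lee_fin EFinD -!Gf; exact: Lip.
  - move=> r r0; have [x Gx] := apx r r0; exists x; by rewrite -lte_fin -Gf.
  - move=> x; rewrite -lee_fin -Gf; exact: G0.
by exists x; rewrite Gf Fx.
Qed.

Lemma le_eps (R : realType) (a b : R) : (forall e, 0 < e -> a <= b + e) -> a <= b.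
Proof.
move=> H; rewrite leNgt; apply/negP => ba.
have := H ((a - b) / 2); lra.
Qed.
Lemma key (R : realType) (eps D : R) (X1 : Type) (d1 : X1 -> X1 -> R) (S1 : set X1)
  (X2 : Type) (d2 : X2 -> X2 -> R) (S2 : set X2) (phi : X1 -> X2) (psi : X2 -> X1)
  (n : nat) (h : R) :
  length_space d1 -> length_space d2 ->
  (forall x y, d1 x y < D) -> (forall x y, d2 x y < D) ->
  (forall p q, (supdist S1 (travel_time d1 p) (travel_time d1 q) < eps%:E)%E ->
    (d1 p q)%:E = supdist S1 (travel_time d1 p) (travel_time d1 q)) ->
  (forall p q, (supdist S2 (travel_time d2 p) (travel_time d2 q) < eps%:E)%E ->
    (d2 p q)%:E = supdist S2 (travel_time d2 p) (travel_time d2 q)) ->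
  (forall x, S1 x -> S2 (phi x)) -> (forall y, S2 y -> S1 (psi y)) ->
  (forall y, S2 y -> phi (psi y) = y) ->
  0 <= h -> 4 * h < eps -> D <= n%:R * (eps / 2) ->
  (forall p, exists q, (supdist S1 (travel_time d1 p) (fun z => d2 q (phi z)) <= h%:E)%E) ->
  (forall q, exists p, (supdist S1 (travel_time d1 p) (fun z => d2 q (phi z)) <= h%:E)%E) ->
  forall p q p' q',
    (supdist S1 (travel_time d1 p) (fun z => d2 q (phi z)) <= h%:E)%E ->
    (supdist S1 (travel_time d1 p') (fun z => d2 q' (phi z)) <= h%:E)%E ->
  forall eta, 0 < eta ->
    d2 q q' <= d1 p p' + n%:R * (2 * h) + eta /\
    d1 p p' <= d2 q q' + n%:R * (2 * h) + eta.
Proof.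
move=> L1 L2 dD1 dD2 Q1 Q2 phiS psiS phiK h0 h4 nD t1 t2 p q p' q' Cpq Cpq' eta eta0.
have F := F4 d2 phiS psiS phiK.
have [m1 _] := L1; have [m2 _] := L2.
have P11 : forall a b, (supdist S1 (travel_time d1 a) (travel_time d1 b) <= (d1 a b)%:E)%E.
  by move=> a b; exact: sd_tt_le.
have P12 : forall a b, (supdist S1 (fun z => d2 a (phi z)) (fun z => d2 b (phi z))
    <= (d2 a b)%:E)%E.
  by move=> a b; rewrite F; exact: sd_tt_le.
have Q2' : forall a b, (supdist S1 (fun z => d2 a (phi z)) (fun z => d2 b (phi z))
    < eps%:E)%E -> (d2 a b)%:E = supdist S1 (fun z => d2 a (phi z)) (fun z => d2 b (phi z)).
  by move=> a b; rewrite F; exact: Q2.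
have tri1 : forall a b c, d1 a c <= d1 a b + d1 b c by case: m1 => _ [_ [_ ?]].
have tri2 : forall a b c, d2 a c <= d2 a b + d2 b c by case: m2 => _ [_ [_ ?]].
set rho := eps - 2 * h.
have rho0 : 0 < rho by rewrite /rho; lra.
have k0 : 0 <= 2 * h by lra.
have nrho : D <= n%:R * rho.
  apply: le_trans nD _; apply: ler_wpM2l => //; rewrite /rho; lra.
have loc12 : forall x x' y y',
    (supdist S1 (travel_time d1 x) (fun z => d2 y (phi z)) <= h%:E)%E ->
    (supdist S1 (travel_time d1 x') (fun z => d2 y' (phi z)) <= h%:E)%E ->
    d1 x x' < rho -> d2 y y' <= d1 x x' + 2 * h.
  move=> x x' y y' Cx Cx' dlt.
  exact: (@local_step R X1 X1 X2 S1 (fun a => travel_time d1 a) d1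
            (fun b z => d2 b (phi z)) d2 eps h x x' y y' P11 Q2' Cx Cx' dlt).
have loc21 : forall y y' x x',
    (supdist S1 (travel_time d1 x) (fun z => d2 y (phi z)) <= h%:E)%E ->
    (supdist S1 (travel_time d1 x') (fun z => d2 y' (phi z)) <= h%:E)%E ->
    d2 y y' < rho -> d1 x x' <= d2 y y' + 2 * h.
  move=> y y' x x' Cx Cx' dlt.
  apply: (@local_step R X1 X2 X1 S1 (fun b z => d2 b (phi z)) d2
            (fun a => travel_time d1 a) d1 eps h y y' x x' P12 Q1) => //.
  - by rewrite sd_sym.
  - by rewrite sd_sym.
split.
- apply: (@chain R X1 X2 d1 d2
     (fun x y => (supdist S1 (travel_time d1 x) (fun z => d2 y (phi z)) <= h%:E)%E)
     rho (2 * h) L1 tri2 t1 rho0 k0 loc12 n) => //.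
  exact: lt_le_trans (dD1 p p') nrho.
- apply: (@chain R X2 X1 d2 d1
     (fun y x => (supdist S1 (travel_time d1 x) (fun z => d2 y (phi z)) <= h%:E)%E)
     rho (2 * h) L2 tri1 t2 rho0 k0 (fun y y' x x' Cx Cx' => loc21 y y' x x' Cx Cx') n) => //.
  exact: lt_le_trans (dD2 q q') nrho.
Qed.
Lemma Hsplit (R : realType) (X1 X2 : Type) (d1 : X1 -> X1 -> R) (S1 : set X1)
  (d2 : X2 -> X2 -> R) (phi : X1 -> X2) (h : R) :
 (hausdorff (supdist S1) (travel_time_data d1) (travel_time_data_phi d2 phi) <= h%:E)%E ->
 (forall p r, h < r -> exists q,
    (supdist S1 (travel_time d1 p) (fun z => d2 q (phi z)) < r%:E)%E) /\
 (forall q r, h < r -> exists p,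
    (supdist S1 (travel_time d1 p) (fun z => d2 q (phi z)) < r%:E)%E).
Proof.
move=> hH; split => [p|q] r hr.
- have : (ereal_inf [set supdist S1 (travel_time d1 p) b | b in
           travel_time_data_phi d2 phi] < r%:E)%E.
    apply: le_lt_trans (_ : _ <= h%:E)%E _; last by rewrite lte_fin.
    apply: le_trans hH; rewrite /hausdorff le_max; apply/orP; left.
    by apply: ereal_sup_ubound; exists (travel_time d1 p) => //; exists p.
  by move=> /ereal_inf_lt [_ [b [q _ <-] <-]] lt; exists q.
- have : (ereal_inf [set supdist S1 a (fun z => d2 q (phi z)) | a in
           travel_time_data d1] < r%:E)%E.
    apply: le_lt_trans (_ : _ <= h%:E)%E _; last by rewrite lte_fin.
    apply: le_trans hH; rewrite /hausdorff le_max; apply/orP; right.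
    by apply: ereal_sup_ubound; exists (fun z => d2 q (phi z)) => //; exists q.
  by move=> /ereal_inf_lt [_ [a [p _ <-] <-]] lt; exists p.
Qed.

Lemma Hd_ge0 (R : realType) (X1 X2 : Type) (d1 : X1 -> X1 -> R) (S1 : set X1)
  (d2 : X2 -> X2 -> R) (phi : X1 -> X2) (x1 : X1) :
  (0 <= hausdorff (supdist S1) (travel_time_data d1) (travel_time_data_phi d2 phi))%E.
Proof.
rewrite /hausdorff le_max; apply/orP; left.
apply: (@le_trans _ _ (ereal_inf [set supdist S1 (travel_time d1 x1) b | b in
           travel_time_data_phi d2 phi])).
  by apply: le_ereal_inf_tmp => _ [b _ <-]; exact: sd_ge0.
by apply: ereal_sup_ubound; exists (travel_time d1 x1) => //; exists x1.
Qed.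

Lemma ecases (R : realType) (x : \bar R) :
  (0 <= x)%E -> x = +oo%E \/ exists h, x = h%:E /\ 0 <= h.
Proof. by case: x => [h h0|_|] //; [right; exists h | left]. Qed.
Theorem mainTheorem1 (R : realType) (eps D : R)
  (X1 : Type) (d1 : X1 -> X1 -> R) (S1 : set X1)
  (X2 : Type) (d2 : X2 -> X2 -> R) (S2 : set X2) :
  0 < eps -> 0 < D ->
  [set: X1] !=set0 -> [set: X2] !=set0 ->
  length_space d1 -> mcompact d1 -> mclosed d1 S1 ->
  length_space d2 -> mcompact d2 -> mclosed d2 S2 ->
  (diam d1 < D%:E)%E -> (diam d2 < D%:E)%E ->
  BLIE d1 S1 eps -> BLIE d2 S2 eps ->
  (forall phi : X1 -> X2, homeo_on d1 d2 S1 S2 phi ->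
     (GH_dist d1 d2 <=
        ((2 * D / eps + 1)%:E *
         hausdorff (supdist S1) (travel_time_data d1)
                   (travel_time_data_phi d2 phi))%E)%E) /\
  ((exists phi : X1 -> X2, homeo_on d1 d2 S1 S2 phi /\
      hausdorff (supdist S1) (travel_time_data d1)
                (travel_time_data_phi d2 phi) = 0%E) ->
   isometric d1 d2).
Proof.
move=> eps0 D0 [x1 _] [x2 _] L1 K1 _ L2 K2 _ dm1 dm2 [_ Q1] [_ Q2].
have [m1 _] := L1; have [m2 _] := L2.
have m1' := m1; have m2' := m2.
move: m1' m2' => [p1 [z1 [s1 tr1]]] [p2 [z2 [s2 tr2]]].
have dD1 : forall x y, d1 x y < D.
  move=> x y; rewrite -lte_fin; apply: le_lt_trans dm1.
  by apply: ereal_sup_ubound; exists x => //; exists y.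
have dD2 : forall x y, d2 x y < D.
  move=> x y; rewrite -lte_fin; apply: le_lt_trans dm2.
  by apply: ereal_sup_ubound; exists x => //; exists y.
set u := 2 * D / eps.
have u0 : 0 <= u by rewrite /u; apply: divr_ge0; lra.
have ueps : u * eps = 2 * D.
  by rewrite /u -mulrA mulVf ?mulr1 // gt_eqF.
have [tl tr] := andP (truncn_itv u0).
set n := (Num.trunc u).+1 in tr *.
have nle : n%:R <= u + 1 by rewrite /n -natr1; lra.
have nD : D <= n%:R * (eps / 2).
  have h1 : 0 <= (n%:R - u) * eps by apply: mulr_ge0; lra.
  rewrite mulrBl ueps in h1.
  have -> : n%:R * (eps / 2) = (n%:R * eps) / 2 by rewrite mulrA.
  lra.
split.
- move=> phi [psi [phiS [psiS [_ [phiK _]]]]].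
  have := ecases (@Hd_ge0 R X1 X2 d1 S1 d2 phi x1).
  case=> [Hinf|[h [Hh h0]]].
    by rewrite Hinf mulry gtr0_sg ?mul1e ?leey //; lra.
  have hH : (hausdorff (supdist S1) (travel_time_data d1)
                (travel_time_data_phi d2 phi) <= h%:E)%E by rewrite Hh.
  have [A1 A2] := Hsplit hH.
  rewrite Hh -EFinM.
  have [big|small] := leP (D / 2) ((u + 1) * h).
    apply: le_trans (@glue R X1 X2 d1 d2 (fun _ _ => True) D m1 m2 _ _ D0 _ _) _.
    - by move=> x; exists x2.
    - by move=> y; exists x1.
    - by move=> p q p' q' _ _; have := dD1 p p'; have := p2 q q'; lra.
    - by move=> p q p' q' _ _; have := dD2 q q'; have := p1 p p'; lra.
    - by rewrite lee_fin.
  have h4 : 4 * h < eps.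
    rewrite ltNge; apply/negP => hb.
    have : u * (eps / 4) <= u * h by apply: ler_wpM2l => //; lra.
    have -> : u * (eps / 4) = (u * eps) / 4 by rewrite mulrA.
    rewrite ueps => uh.
    move: small; rewrite mulrDl mul1r; lra.
  apply/lee_addgt0Pr => eta eta0.
  set c := u + 1.
  have c0 : 0 < c by rewrite /c; lra.
  set mm := Num.min (eps / 4 - h) (eta / c).
  have mm0 : 0 < mm.
    by rewrite /mm lt_min; apply/andP; split; [lra | exact: divr_gt0].
  have mm1 : mm <= eps / 4 - h by rewrite /mm ge_min lexx.
  have mm2 : c * mm <= eta.
    have : mm <= eta / c by rewrite /mm ge_min lexx orbT.
    move/(ler_wpM2l (ltW c0)).
    by rewrite mulrCA mulfV ?mulr1 // gt_eqF.
  set h' := h + mm / 2.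
  have h'0 : 0 <= h' by rewrite /h'; lra.
  have h'4 : 4 * h' < eps by rewrite /h'; lra.
  have t1 : forall p, exists q,
      (supdist S1 (travel_time d1 p) (fun z => d2 q (phi z)) <= h'%:E)%E.
    move=> p; have [|q hq] := A1 p h'; first by rewrite /h'; lra.
    by exists q; exact: ltW.
  have t2 : forall q, exists p,
      (supdist S1 (travel_time d1 p) (fun z => d2 q (phi z)) <= h'%:E)%E.
    move=> q; have [|p hp] := A2 q h'; first by rewrite /h'; lra.
    by exists p; exact: ltW.
  have KEY := @key R eps D X1 d1 S1 X2 d2 S2 phi psi n h' L1 L2 dD1 dD2 Q1 Q2
    phiS psiS phiK h'0 h'4 nD t1 t2.
  have nh0 : 0 <= n%:R * (2 * h') by apply: mulr_ge0; lra.
  apply: le_trans (@glue R X1 X2 d1 d2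
     (fun p q => (supdist S1 (travel_time d1 p) (fun z => d2 q (phi z)) <= h'%:E)%E)
     (n%:R * (2 * h') + eta) m1 m2 t1 t2 _ _ _) _.
  - lra.
  - move=> p q p' q' C C'; have [_ H] := KEY p q p' q' C C' eta eta0; lra.
  - move=> p q p' q' C C'; have [H _] := KEY p q p' q' C C' eta eta0; lra.
  rewrite lee_fin.
  have : n%:R * h' <= c * h' by apply: ler_wpM2r.
  have -> : c * h' = c * h + (c * mm) / 2 by rewrite /h' mulrDr mulrA.
  have -> : n%:R * (2 * h') = 2 * (n%:R * h') by rewrite mulrCA.
  lra.
- move=> [phi [[psi [phiS [psiS [_ [phiK _]]]]] H0]].
  have hH : (hausdorff (supdist S1) (travel_time_data d1)
                (travel_time_data_phi d2 phi) <= (0:R)%:E)%E by rewrite H0.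
  have [A1 A2] := Hsplit hH.
  have F := F4 d2 phiS psiS phiK.
  have bound : forall p q,
      (supdist S1 (travel_time d1 p) (fun z => d2 q (phi z)) <= (2 * D)%:E)%E.
    move=> p q; apply: sd_le; first by rewrite lee_fin; lra.
    move=> z _; rewrite lee_fin /travel_time.
    have := dD1 p z; have := dD2 q (phi z); have := p1 p z; have := p2 q (phi z).
    move=> ? ? ? ?; rewrite ler_norml; apply/andP; split; lra.
  have t1 : forall p, exists q,
      (supdist S1 (travel_time d1 p) (fun z => d2 q (phi z)) <= (0:R)%:E)%E.
    move=> p.
    have [q Hq] : exists q,
        supdist S1 (travel_time d1 p) (fun z => d2 q (phi z)) = 0%E.
      apply: (@zero_attainedE R X2 d2
        (fun q => supdist S1 (travel_time d1 p) (fun z => d2 q (phi z))) (2 * D) K2).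
      - by move=> q; exact: sd_ge0.
      - by move=> q; exact: bound.
      - move=> q q'.
        apply: le_trans (sd_tri _ _ (fun z => d2 q' (phi z)) _) _.
        apply: leeD; first exact: lexx.
        by rewrite (s2 q q') F; exact: sd_tt_le.
      - by move=> r r0; have [q Hq] := A1 p r r0; exists q.
    by exists q; rewrite Hq.
  have t2 : forall q, exists p,
      (supdist S1 (travel_time d1 p) (fun z => d2 q (phi z)) <= (0:R)%:E)%E.
    move=> q.
    have [p Hp] : exists p,
        supdist S1 (travel_time d1 p) (fun z => d2 q (phi z)) = 0%E.
      apply: (@zero_attainedE R X1 d1
        (fun p => supdist S1 (travel_time d1 p) (fun z => d2 q (phi z))) (2 * D) K1).
      - by move=> p; exact: sd_ge0.
      - by move=> p; exact: bound.
      - move=> p p'.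
        apply: le_trans (sd_tri _ _ (travel_time d1 p') _) _.
        rewrite addeC; apply: leeD; first exact: lexx.
        exact: sd_tt_le.
      - by move=> r r0; have [p Hp] := A2 q r r0; exists p.
    by exists p; rewrite Hp.
  have h0 : (0:R) <= 0 by [].
  have h4 : 4 * (0:R) < eps by rewrite mulr0.
  have KEY := @key R eps D X1 d1 S1 X2 d2 S2 phi psi n 0 L1 L2 dD1 dD2 Q1 Q2
    phiS psiS phiK h0 h4 nD t1 t2.
  have n0 : n%:R * (2 * (0:R)) = 0 by rewrite !mulr0.
  have eqd : forall p q p' q',
      (supdist S1 (travel_time d1 p) (fun z => d2 q (phi z)) <= (0:R)%:E)%E ->
      (supdist S1 (travel_time d1 p') (fun z => d2 q' (phi z)) <= (0:R)%:E)%E ->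
      d2 q q' = d1 p p'.
    move=> p q p' q' C C'; apply/eqP; rewrite eq_le; apply/andP; split;
      apply: le_eps => e e0; have [H1 H2] := KEY p q p' q' C C' e e0; lra.
  pose f := fun p => sval (cid (t1 p)).
  have fP : forall p, (supdist S1 (travel_time d1 p) (fun z => d2 (f p) (phi z))
     <= (0:R)%:E)%E by move=> p; exact: (svalP (cid (t1 p))).
  pose g := fun q => sval (cid (t2 q)).
  have gP : forall q, (supdist S1 (travel_time d1 (g q)) (fun z => d2 q (phi z))
     <= (0:R)%:E)%E by move=> q; exact: (svalP (cid (t2 q))).
  exists f; split.
    exists g => [p|q].
      by apply/z1; rewrite -(eqd _ _ _ _ (gP (f p)) (fP p)); exact/z2.
    by apply/z2; rewrite (eqd _ _ _ _ (fP (g q)) (gP q)); exact/z1.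
  by move=> p p'; exact: eqd (fP p) (fP p').
Qed.
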